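(* The set $\mathcal{P}_{\mathrm{fin}}(I)$ of finite subsets of $I$ is a quantifier-free definable subset of the structure $\mathcal{L}(I)$.
   Context: Let $I$ be a dense linear order with left endpoint $0$ and no right endpoint. Let $\mathcal{P}_{\mathrm{fci}}(I)$ be the set of finite unions of closed intervals $[i,j]$, $[i,+\infty)$, $(-\infty,j]$ of $I$. $\mathcal{L}(I)$ is the structure with universe $\mathcal{P}_{\mathrm{fci}}(I)$ in the signature $\{\cup,\cap,\bot,c_0,\min,\max,l,r\}$, interpreted as follows. - $\cup$ and $\cap$ are union and intersection. - $\bot$ is $\emptyset$, and $c_0$ is $\{0\}$. - $\min(A)$ is the singleton of the least element of $A$, with $\min(\emptyset)=\emptyset$. - $\max(A)$ is the singleton of the greatest element when $A$ is nonempty and bounded, and $\emptyset$ otherwise. - $l(A)$ and $r(A)$ are the sets of left and right endpoints of $A$. Left endpoints are the minima of the maximal closed intervals composing $A$. Right endpoints are the maxima of the bounded ones. *)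

(* Defs.v *)
From HB Require Import structures.
From mathcomp Require Import all_boot all_order.
From mathcomp Require Import boolp classical_sets cardinality.
Set Implicit Arguments. Unset Strict Implicit. Unset Printing Implicit Defensive.
Import Order.TTheory.
Local Open Scope classical_set_scope.
Local Open Scope order_scope.

Section LI.
Context {d : Order.disp_t} {T : orderType d}.

Definition dlo_left_endpoint (z0 : T) : Prop :=
  [/\ (forall x y : T, x < y -> exists z, x < z /\ z < y),
      (forall x : T, z0 <= x) &
      (forall x : T, exists y, x < y)].

Definition is_cint (J : set T) : Prop :=
  (exists i j, i <= j /\ J = [set x | i <= x /\ x <= j]) \/
  (exists i, J = [set x | i <= x]) \/
  (exists j, J = [set x | x <= j]).

Definition is_fci (A : set T) : Prop :=
  exists (n : nat) (F : nat -> set T),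
    (forall k, (k < n)%N -> is_cint (F k)) /\
    A = \bigcup_(k in [set k | (k < n)%N]) F k.

Definition least (A : set T) (x : T) : Prop := A x /\ forall y, A y -> x <= y.
Definition greatest (A : set T) (x : T) : Prop := A x /\ forall y, A y -> y <= x.

Definition Lmin (A : set T) : set T := [set x | least A x].
Definition Lmax (A : set T) : set T := [set x | greatest A x].

Definition max_cint (A J : set T) : Prop :=
  is_cint J /\ J `<=` A /\ (forall K, is_cint K -> J `<=` K -> K `<=` A -> K = J).

Definition Lleft (A : set T) : set T :=
  [set x | exists J, max_cint A J /\ least J x].
Definition Lright (A : set T) : set T :=
  [set x | exists J, max_cint A J /\ greatest J x].

End LI.

Inductive lterm : Type :=
| TVar
| TBot
| TC0
| TCup of lterm & lterm
| TCap of lterm & lterm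
| TMin of lterm
| TMax of lterm
| TL of lterm
| TR of lterm.

Inductive qf_formula : Type :=
| FTrue
| FEq of lterm & lterm
| FNot of qf_formula
| FAnd of qf_formula & qf_formula
| FOr of qf_formula & qf_formula.

Section Sem.
Context {d : Order.disp_t} {T : orderType d} (z0 : T).

Fixpoint eval_term (t : lterm) (A : set T) : set T :=
  match t with
  | TVar => A
  | TBot => set0
  | TC0 => [set z0]
  | TCup t1 t2 => eval_term t1 A `|` eval_term t2 A
  | TCap t1 t2 => eval_term t1 A `&` eval_term t2 A
  | TMin t1 => Lmin (eval_term t1 A)
  | TMax t1 => Lmax (eval_term t1 A)
  | TL t1 => Lleft (eval_term t1 A)
  | TR t1 => Lright (eval_term t1 A)
  end.

Fixpoint holds (f : qf_formula) (A : set T) : Prop :=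
  match f with
  | FTrue => True
  | FEq t1 t2 => eval_term t1 A = eval_term t2 A
  | FNot g => ~ holds g A
  | FAnd g h => holds g A /\ holds h A
  | FOr g h => holds g A \/ holds h A
  end.
End Sem.

(* Main.v *)
Require Import Defs.
From mathcomp Require Import all_boot all_order.
From mathcomp Require Import boolp classical_sets cardinality.
Import Order.TTheory.
Local Open Scope classical_set_scope.
Local Open Scope order_scope.

Section Aux.
Context {d : Order.disp_t} {T : orderType d}.

Lemma seq_gap (dense : forall x y : T, x < y -> exists z, x < z /\ z < y) (s : seq T) :
  forall p q : T, p < q -> exists x, p < x /\ x <= q /\ x \notin s.
Proof.
elim: s => [|a s IH] p q pq; first by exists q; rewrite pq lexx.
have [/andP[pa aq]|na] := boolP ((p < a) && (a <= q)).
  have [y [py ya]] := dense _ _ pa.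
  have [x [px [xy xs]]] := IH _ _ py.
  exists x; split => //; split; first by apply: le_trans (ltW (le_lt_trans xy ya)) aq.
  rewrite in_cons negb_or xs andbT; apply/eqP => xa; subst.
  by rewrite ltNge xy in ya.
have [x [px [xq xs]]] := IH _ _ pq.
exists x; split => //; split => //; rewrite in_cons negb_or xs andbT.
by apply/eqP => xa; subst; rewrite px xq in na.
Qed.

Lemma cint_convex {K : set T} {p q t} : is_cint K -> K p -> K q -> p <= t -> t <= q -> K t.
Proof.
case=> [[i [j [_ ->]]]|[[i ->]|[j ->]]] /=.
- by move=> [ip _] [_ qj] pt tq; split; [apply: le_trans pt | apply: le_trans qj].
- by move=> ip _ pt _; apply: le_trans pt.
- by move=> _ qj _ tq; apply: le_trans qj.
Qed.

Lemma no_interval {z0 : T} {A : set T} {i j} :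
  dlo_left_endpoint z0 -> A = Lleft A -> i < j ->
  [set x | i <= x /\ x <= j] `<=` A -> False.
Proof.
move=> [dense z0l _] AL ij sub.
have [y [iy yj]] := dense _ _ ij.
have : Lleft A y by rewrite -AL; apply: sub; split; apply: ltW.
move=> [J [[cJ [JA Jmax]] [Jy Jl]]].
have yK : forall x, i <= x -> x <= y -> A x.
  by move=> x ix xy; apply: sub; split => //; apply: le_trans xy (ltW yj).
move: cJ => cJ0; case: (cJ0) => [[a [b [ab Je]]]|[[a Je]|[b Je]]].
- have ya : y = a.
    apply/eqP; rewrite eq_le Jl ?andbT; last by rewrite Je /=; split.
    by move: Jy; rewrite Je => -[].
  subst a.
  have E : [set x | i <= x /\ x <= b] = J.
    apply: Jmax.
    + by left; exists i, b; split => //; apply: le_trans (ltW iy) ab.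
    + by rewrite Je => x [yx xb]; split => //; apply: le_trans (ltW iy) yx.
    + move=> x [ix xb]; have [xy|yx] := leP x y; first exact: yK.
      by apply: JA; rewrite Je; split => //; apply: ltW.
  have : J i by rewrite -E /=; split => //; apply: le_trans (ltW iy) ab.
  by move=> /Jl; rewrite leNgt iy.
- have ya : y = a.
    apply/eqP; rewrite eq_le Jl ?andbT; last by rewrite Je /=.
    by move: Jy; rewrite Je.
  subst a.
  have E : [set x | i <= x] = J.
    apply: Jmax.
    + by right; left; exists i.
    + by rewrite Je => x yx /=; apply: le_trans (ltW iy) yx.
    + move=> x ix; have [xy|yx] := leP x y; first exact: yK.
      by apply: JA; rewrite Je; apply: ltW.
  have : J i by rewrite -E /=.
  by move=> /Jl; rewrite leNgt iy.
- have : J z0 by rewrite Je /=.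
  move=> /Jl yz; have := le_lt_trans (z0l i) iy.
  by rewrite ltNge yz.
Qed.

End Aux.

Theorem proposition5p1 (d : Order.disp_t) (T : orderType d) (z0 : T) :
  dlo_left_endpoint z0 ->
  exists phi : qf_formula,
    forall A : set T, is_fci A -> (holds z0 phi A <-> finite_set A).
Proof.
move=> H; exists (FEq TVar (TL TVar)) => A [n [F [Fc AF]]] /=; split.
- move=> AL; rewrite AF; apply: bigcup_finite.
    by apply/finite_setP; exists n.
  move=> k /= kn; have := Fc k kn.
  case=> [[i [j [ij Fk]]]|[[i Fk]|[j Fk]]]; rewrite Fk.
  + have [ij'|] := ltP i j.
      by exfalso; apply: (no_interval H AL ij'); rewrite AF => x xi; exists k => //; rewrite Fk.
    move=> ji; have -> : [set x | i <= x /\ x <= j] = [set i].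
      apply/seteqP; split => x /=.
        by move=> [ix xj]; apply/eqP; rewrite eq_le ix (le_trans xj ji).
      by move=> ->; split.
    exact: finite_set1.
  + exfalso; case: (H) => _ _ /(_ i) [j ij].
    by apply: (no_interval H AL ij); rewrite AF => x [ix _]; exists k => //; rewrite Fk.
  + case: (H) => _ z0l _; have [zj|] := ltP z0 j.
      by exfalso; apply: (no_interval H AL zj); rewrite AF => x [_ xj]; exists k => //; rewrite Fk.
    move=> jz; have -> : [set x | x <= j] = [set z0].
      apply/seteqP; split => x /=.
        by move=> xj; apply/eqP; rewrite eq_le z0l (le_trans xj jz).
      by move=> ->; apply: z0l.
    exact: finite_set1.
- move=> /finite_seqP [s As].
  case: (H) => dense z0l _.
  apply/seteqP; split => x; last first.
    by move=> [J [[_ [JA _]] [Jx _]]]; apply: JA.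
  move=> Ax; exists [set y | x <= y /\ y <= x]; split; last first.
    by split => [|y [] //]; split.
  split; first by left; exists x, x.
  split; first by move=> y [xy yx]; have -> : y = x by apply/eqP; rewrite eq_le yx xy.
  move=> K cK JK KA.
  have Kx : K x by apply: JK; split.
  apply/seteqP; split => y Ky; last exact: JK.
  suff -> : y = x by split.
  apply/eqP; rewrite eq_le; apply/andP; split; rewrite leNgt; apply/negP => lt.
  + have [z [xz [zy zs]]] := seq_gap dense s _ _ lt.
    have : A z by apply: KA; exact: (cint_convex cK Kx Ky (ltW xz) zy).
    by rewrite As /= (negbTE zs).
  + have [z [yz [zx zs]]] := seq_gap dense s _ _ lt.
    have : A z by apply: KA; exact: (cint_convex cK Ky Kx (ltW yz) zx).
    by rewrite As /= (negbTE zs).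
Qed.
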